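(* Let $(I,\preccurlyeq)$ be a directed set, let $S(\Lambda^{\preccurlyeq})$ be a direct spectrum over $(I,\preccurlyeq)$ with sets $\lambda_0(i)$, transports $\lambda^{\preccurlyeq}_{ij}$ and Bishop spaces $\mathcal F_i=(\lambda_0(i),F_i)$, let $(J,e,\mathrm{cof}_J)$ be a cofinal subset of $I$, and let $S(\Lambda^{\preccurlyeq})\circ e$ be the relative spectrum of $S(\Lambda^{\preccurlyeq})$ to $J$, with Bishop spaces $\mathcal F_j:=\mathcal F_{e(j)}$, $j\in J$. Then $\underset{\to}{\mathrm{Lim}}\,\mathcal F_j\simeq\underset{\to}{\mathrm{Lim}}\,\mathcal F_i$, where the left side is the direct limit of $S(\Lambda^{\preccurlyeq})\circ e$ over $J$ and the right side the direct limit of $S(\Lambda^{\preccurlyeq})$ over $I$.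
   Context: Work in Bishop-style constructive mathematics (no choice principles). Each set has its own equality; functions respect it; $e$ is an embedding if $e(j)=e(j')$ implies $j=j'$. A directed set $(I,\preccurlyeq)$: a set with a reflexive transitive relation respecting equality, any two elements having a common upper bound. A direct family over $(I,\preccurlyeq)$: sets $\lambda_0(i)$ and functions $\lambda^{\preccurlyeq}_{ij}:\lambda_0(i)\to\lambda_0(j)$ for $i\preccurlyeq j$ with $\lambda^{\preccurlyeq}_{ii}=\mathrm{id}$ and $\lambda^{\preccurlyeq}_{ik}=\lambda^{\preccurlyeq}_{jk}\circ\lambda^{\preccurlyeq}_{ij}$. Bishop spaces: a Bishop topology on $X$ is a set $F$ of functions $X\to\mathbb R$ containing constants, closed under addition, under composition with functions $\mathbb R\to\mathbb R$ uniformly continuous on every $[-n,n]$, and under uniform limits; $\bigvee F_0$ = least Bishop topology containing $F_0$; a Bishop morphism $(X,F)\to(Y,G)$ is a function $h$ with $g\circ h\in F$ for all $g\in G$; a Bishop isomorphism is a bijective Bishop morphism whose inverse is a Bishop morphism; $\simeq$ means Bishop isomorphic. A direct spectrum: a direct family with Bishop topologies $F_i$ on $\lambda_0(i)$ such that each transport is a Bishop morphism. Cofinal subset $(J,e,\mathrm{cof}_J)$: a set $J$, an embedding $e:J\to I$ (with $j\preccurlyeq j'$ iff $e(j)\preccurlyeq e(j')$) and a function $\mathrm{cof}_J:I\to J$ with $\mathrm{cof}_J(e(j))=j$ for all $j$, $i\preccurlyeq i'\Rightarrow\mathrm{cof}_J(i)\preccurlyeq\mathrm{cof}_J(i')$,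 and $i\preccurlyeq e(\mathrm{cof}_J(i))$ for all $i$ (then $(J,\preccurlyeq)$ is directed). The relative spectrum $S(\Lambda^{\preccurlyeq})\circ e$ over $(J,\preccurlyeq)$ has sets $\lambda_0(e(j))$, transports $\lambda^{\preccurlyeq}_{e(j)e(j')}$ for $j\preccurlyeq j'$, and topologies $F_{e(j)}$. Direct limit of a direct spectrum over $(I,\preccurlyeq)$: $\sum^{\preccurlyeq}\lambda_0(i)$ = pairs $(i,x)$ with $(i,x)=(j,y)$ iff there is $k\succcurlyeq i,j$ with $\lambda^{\preccurlyeq}_{ik}(x)=\lambda^{\preccurlyeq}_{jk}(y)$; $\prod^{\succcurlyeq}F_i$ = dependent assignments $\Theta$ with $\Theta_i\in F_i$ and $\Theta_i=\Theta_j\circ\lambda^{\preccurlyeq}_{ij}$ for $i\preccurlyeq j$; $\underset{\to}{\mathrm{Lim}}\,\lambda_0(i)$ = equivalence classes $\mathrm{eql}_0(i,x)$ under this equality; $\mathrm{eql}_0f_\Theta(\mathrm{eql}_0(i,x)):=\Theta_i(x)$; $\underset{\to}{\mathrm{Lim}}\,\mathcal F_i=(\underset{\to}{\mathrm{Lim}}\,\lambda_0(i),\bigvee\{\mathrm{eql}_0f_\Theta:\Theta\in\prod^{\succcurlyeq}F_i\})$. *)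

(* Defs.v *)
From Stdlib Require Import Reals.
Open Scope R_scope.

(** Bishop sets are modelled as a carrier type together with an equality
    relation (required to be an equivalence where the paper says "set"). *)

Definition is_equivalence {X : Type} (eqX : X -> X -> Prop) : Prop :=
  (forall x, eqX x x) /\
  (forall x y, eqX x y -> eqX y x) /\
  (forall x y z, eqX x y -> eqX y z -> eqX x z).

Definition ext_fun {X : Type} (eqX : X -> X -> Prop) (f : X -> R) : Prop :=
  forall x y, eqX x y -> f x = f y.

Definition ucont_bounded (phi : R -> R) : Prop :=
  forall (n : nat) (eps : R), 0 < eps ->
    exists delta, 0 < delta /\
      forall x y, Rabs x <= INR n -> Rabs y <= INR n ->
        Rabs (x - y) < delta -> Rabs (phi x - phi y) < eps.

Definition uniform_limit {X : Type} (fs : nat -> X -> R) (f : X -> R) : Prop :=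
  forall eps, 0 < eps -> exists N : nat, forall n, (N <= n)%nat ->
    forall x, Rabs (fs n x - f x) <= eps.

Definition bishop_topology {X : Type} (eqX : X -> X -> Prop)
    (F : (X -> R) -> Prop) : Prop :=
  (forall f, F f -> ext_fun eqX f) /\
  (forall a : R, F (fun _ => a)) /\
  (forall f g, F f -> F g -> F (fun x => f x + g x)) /\
  (forall f phi, F f -> ucont_bounded phi -> F (fun x => phi (f x))) /\
  (forall (fs : nat -> X -> R) (f : X -> R),
      (forall n, F (fs n)) -> uniform_limit fs f -> F f).

Definition bishop_gen {X : Type} (eqX : X -> X -> Prop)
    (F0 : (X -> R) -> Prop) (f : X -> R) : Prop :=
  forall F : (X -> R) -> Prop, bishop_topology eqX F ->
    (forall g, F0 g -> F g) -> F f.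

Definition bishop_morphism {X Y : Type}
    (eqX : X -> X -> Prop) (F : (X -> R) -> Prop)
    (eqY : Y -> Y -> Prop) (G : (Y -> R) -> Prop) (h : X -> Y) : Prop :=
  (forall x x', eqX x x' -> eqY (h x) (h x')) /\
  (forall g, G g -> F (fun x => g (h x))).

Definition bishop_iso {X Y : Type}
    (eqX : X -> X -> Prop) (F : (X -> R) -> Prop)
    (eqY : Y -> Y -> Prop) (G : (Y -> R) -> Prop) : Prop :=
  exists (h : X -> Y) (k : Y -> X),
    bishop_morphism eqX F eqY G h /\
    bishop_morphism eqY G eqX F k /\
    (forall x, eqX (k (h x)) x) /\
    (forall y, eqY (h (k y)) y).

Definition is_directed {I : Type} (eqI : I -> I -> Prop)
    (le : I -> I -> Prop) : Prop :=
  is_equivalence eqI /\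
  (forall i i' j j', eqI i i' -> eqI j j' -> le i j -> le i' j') /\
  (forall i, le i i) /\
  (forall i j k, le i j -> le j k -> le i k) /\
  (forall i j, exists k, le i k /\ le j k).

Definition is_direct_spectrum {I : Type} (le : I -> I -> Prop)
    (lam0 : I -> Type) (eqlam : forall i, lam0 i -> lam0 i -> Prop)
    (lam : forall i j, le i j -> lam0 i -> lam0 j)
    (F : forall i, (lam0 i -> R) -> Prop) : Prop :=
  (forall i, is_equivalence (eqlam i)) /\
  (forall i j (p : le i j) x x', eqlam i x x' ->
      eqlam j (lam i j p x) (lam i j p x')) /\
  (forall i j (p q : le i j) x, eqlam j (lam i j p x) (lam i j q x)) /\
  (forall i (p : le i i) x, eqlam i (lam i i p x) x) /\
  (forall i j k (p : le i j) (q : le j k) (r : le i k) x,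
      eqlam k (lam i k r x) (lam j k q (lam i j p x))) /\
  (forall i, bishop_topology (eqlam i) (F i)) /\
  (forall i j (p : le i j),
      bishop_morphism (eqlam i) (F i) (eqlam j) (F j) (lam i j p)).

Definition is_cofinal {I J : Type} (eqI : I -> I -> Prop) (le : I -> I -> Prop)
    (eqJ : J -> J -> Prop) (e : J -> I) (cof : I -> J) : Prop :=
  is_equivalence eqJ /\
  (forall j j', eqJ j j' -> eqI (e j) (e j')) /\
  (forall j j', eqI (e j) (e j') -> eqJ j j') /\
  (forall i i', eqI i i' -> eqJ (cof i) (cof i')) /\
  (forall j, eqJ (cof (e j)) j) /\
  (forall i i', le i i' -> le (e (cof i)) (e (cof i'))) /\
  (forall i, le i (e (cof i))).

Definition le_rel {I J : Type} (le : I -> I -> Prop) (e : J -> I) : J -> J -> Prop :=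
  fun j j' => le (e j) (e j').

Section DirectLimit.
Context {I : Type} (le : I -> I -> Prop) (lam0 : I -> Type)
  (eqlam : forall i, lam0 i -> lam0 i -> Prop)
  (lam : forall i j, le i j -> lam0 i -> lam0 j)
  (F : forall i, (lam0 i -> R) -> Prop).

Definition lim_eq (a b : {i : I & lam0 i}) : Prop :=
  exists k (p : le (projT1 a) k) (q : le (projT1 b) k),
    eqlam k (lam _ k p (projT2 a)) (lam _ k q (projT2 b)).

Definition prod_assign (Theta : forall i, lam0 i -> R) : Prop :=
  (forall i, F i (Theta i)) /\
  (forall i j (p : le i j) x, Theta i x = Theta j (lam i j p x)).

Definition eql0f (Theta : forall i, lam0 i -> R) (a : {i : I & lam0 i}) : R :=
  Theta (projT1 a) (projT2 a).

Definition lim_top (f : {i : I & lam0 i} -> R) : Prop :=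
  bishop_gen lim_eq
    (fun g => exists Theta, prod_assign Theta /\ forall a, g a = eql0f Theta a) f.
End DirectLimit.

(* Main.v *)
Require Import Defs.
From Stdlib Require Import Reals Lra.
Open Scope R_scope.

Lemma ext_ulimit {X : Type} (eqX : X -> X -> Prop) (fs : nat -> X -> R) f :
  (forall n, ext_fun eqX (fs n)) -> uniform_limit fs f -> ext_fun eqX f.
Proof.
  intros Hn Hu x y Hxy.
  destruct (Req_dec (f x) (f y)) as [E|NE]; [exact E|exfalso].
  assert (Hd : 0 < Rabs (f x - f y)) by (apply Rabs_pos_lt; lra).
  destruct (Hu (Rabs (f x - f y) / 4)) as [N HN]; [lra|].
  pose proof (HN N (le_n N) x) as H1. pose proof (HN N (le_n N) y) as H2.
  rewrite (Hn N x y Hxy) in H1.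
  revert Hd H1 H2. unfold Rabs; repeat destruct Rcase_abs; intros; lra.
Qed.

Lemma gen_top {X : Type} (eqX : X -> X -> Prop) F0 :
  (forall g, F0 g -> ext_fun eqX g) -> bishop_topology eqX (bishop_gen eqX F0).
Proof.
  intros H0. split; [|split; [|split; [|split]]].
  - intros f Hf. apply (Hf (ext_fun eqX)); [|exact H0].
    split; [|split; [|split; [|split]]].
    + intros g Hg; exact Hg.
    + intros a x y _; reflexivity.
    + intros f1 g1 H1 H2 x y Hxy. rewrite (H1 x y Hxy), (H2 x y Hxy). reflexivity.
    + intros f1 phi H1 _ x y Hxy. rewrite (H1 x y Hxy). reflexivity.
    + intros fs f1 Hfs Hu. exact (ext_ulimit eqX fs f1 Hfs Hu).
  - intros a F HF _. apply HF.
  - intros f g Hf Hg F HF HF0. apply HF; [apply Hf|apply Hg]; assumption.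
  - intros f phi Hf Hphi F HF HF0. apply HF; [apply Hf|]; assumption.
  - intros fs f Hfs Hu F HF HF0. apply (proj2 (proj2 (proj2 (proj2 HF))) fs f).
    + intros n; apply Hfs; assumption.
    + exact Hu.
Qed.

Lemma gen_incl {X : Type} (eqX : X -> X -> Prop) (F0 : (X -> R) -> Prop) g :
  F0 g -> bishop_gen eqX F0 g.
Proof. intros H F _ HF. apply HF, H. Qed.

Lemma gen_pull {X Y : Type} (eqX : X -> X -> Prop) (G : (X -> R) -> Prop)
  (eqY : Y -> Y -> Prop) (F0 : (Y -> R) -> Prop) (h : X -> Y) :
  bishop_topology eqX G -> (forall g, F0 g -> ext_fun eqY g) ->
  (forall g, F0 g -> G (fun x => g (h x))) ->
  forall g, bishop_gen eqY F0 g -> G (fun x => g (h x)).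
Proof.
  intros HG Hext HF0 g Hg.
  destruct HG as [Ge [Gc [Gs [Gp Gu]]]].
  apply (Hg (fun g => ext_fun eqY g /\ G (fun x => g (h x)))).
  - split; [|split; [|split; [|split]]].
    + intros f Hf; apply Hf.
    + intros a; split; [intros x y _; reflexivity|apply Gc].
    + intros f1 g1 [H1 H1'] [H2 H2']. split; [|exact (Gs _ _ H1' H2')].
      intros x y Hxy. rewrite (H1 x y Hxy), (H2 x y Hxy). reflexivity.
    + intros f1 phi [H1 H1'] Hp. split; [|exact (Gp _ phi H1' Hp)].
      intros x y Hxy. rewrite (H1 x y Hxy). reflexivity.
    + intros fs f1 Hfs Hu. split.
      { apply (ext_ulimit eqY fs f1); [intro n; apply Hfs|exact Hu]. }
      apply (Gu (fun n x => fs n (h x))).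
      * intro n; apply Hfs.
      * intros eps Heps. destruct (Hu eps Heps) as [N HN]. exists N.
        intros n Hn x. apply HN, Hn.
  - intros g0 H; split; [apply Hext|apply HF0]; exact H.
Qed.

Lemma gen_ext {I : Type} (le : I -> I -> Prop) (lam0 : I -> Type)
  (eqlam : forall i, lam0 i -> lam0 i -> Prop)
  (lam : forall i j, le i j -> lam0 i -> lam0 j)
  (F : forall i, (lam0 i -> R) -> Prop) :
  (forall i f, F i f -> ext_fun (eqlam i) f) ->
  forall g, (exists Theta, prod_assign le lam0 lam F Theta /\
              forall a, g a = eql0f lam0 Theta a) ->
  ext_fun (lim_eq le lam0 eqlam lam) g.
Proof.
  intros HF g [Theta [[HT1 HT2] Hg]] [i x] [j y] [k [p [q Hk]]].
  rewrite !Hg. unfold eql0f; simpl in *.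
  rewrite (HT2 i k p x), (HT2 j k q y). apply (HF k _ (HT1 k)). exact Hk.
Qed.
Theorem theorem9p12
  (I : Type) (eqI : I -> I -> Prop) (le : I -> I -> Prop)
  (lam0 : I -> Type) (eqlam : forall i, lam0 i -> lam0 i -> Prop)
  (lam : forall i j, le i j -> lam0 i -> lam0 j)
  (F : forall i, (lam0 i -> R) -> Prop)
  (J : Type) (eqJ : J -> J -> Prop) (e : J -> I) (cof : I -> J) :
  is_directed eqI le ->
  is_direct_spectrum le lam0 eqlam lam F ->
  is_cofinal eqI le eqJ e cof ->
  bishop_iso
    (lim_eq (le_rel le e) (fun j => lam0 (e j)) (fun j => eqlam (e j))
       (fun j j' (p : le_rel le e j j') => lam (e j) (e j') p))
    (lim_top (le_rel le e) (fun j => lam0 (e j)) (fun j => eqlam (e j))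
       (fun j j' (p : le_rel le e j j') => lam (e j) (e j') p)
       (fun j => F (e j)))
    (lim_eq le lam0 eqlam lam)
    (lim_top le lam0 eqlam lam F).
Proof.
  intros [HeqI [Hresp [Hrefl [Htrans _]]]]
         [Heq [Hlamext [Hpi [Hid [Hcomp [Htop Hmor]]]]]]
         [_ [HeJ [_ [_ [Hcofe [Hmon Hle]]]]]].
  assert (Fext : forall i f, F i f -> ext_fun (eqlam i) f)
    by (intros i f Hf; exact (proj1 (Htop i) f Hf)).
  assert (Esym : forall i x y, eqlam i x y -> eqlam i y x)
    by (intros i; apply (Heq i)).
  assert (Etr : forall i x y z, eqlam i x y -> eqlam i y z -> eqlam i x z)
    by (intros i; apply (Heq i)).
  exists (fun a => existT lam0 (e (projT1 a)) (projT2 a)).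
  exists (fun a => existT (fun j => lam0 (e j)) (cof (projT1 a))
                     (lam (projT1 a) (e (cof (projT1 a))) (Hle (projT1 a)) (projT2 a))).
  split; [|split; [|split]].
  - split.
    + intros [j x] [j' y] [m [p [q Hm]]]. exists (e m), p, q. exact Hm.
    + eapply gen_pull.
      * apply gen_top. apply (gen_ext (le_rel le e) (fun j => lam0 (e j))).
        intros j; apply Fext.
      * apply gen_ext; exact Fext.
      * intros g [Theta [[HT1 HT2] Hg]]. apply gen_incl.
        exists (fun j => Theta (e j)). split; [split|].
        -- intros j; apply HT1.
        -- intros j j' p x. apply HT2.
        -- intros [j x]. rewrite Hg. reflexivity.
  - split.
    + intros [i x] [i' y] [m [p [q Hm]]]. simpl in *.
      exists (cof m), (Hmon i m p), (Hmon i' m q). simpl.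
      assert (Hx : forall i0 x0 (p0 : le i0 m),
        eqlam (e (cof m)) (lam (e (cof i0)) (e (cof m)) (Hmon i0 m p0)
                   (lam i0 (e (cof i0)) (Hle i0) x0))
              (lam m (e (cof m)) (Hle m) (lam i0 m p0 x0))).
      { intros i0 x0 p0.
        apply Etr with (lam i0 (e (cof m)) (Htrans _ _ _ p0 (Hle m)) x0).
        - apply Esym, Hcomp.
        - apply Hcomp. }
      apply Etr with (lam m (e (cof m)) (Hle m) (lam i m p x)); [apply Hx|].
      apply Etr with (lam m (e (cof m)) (Hle m) (lam i' m q y)); [|apply Esym, Hx].
      apply Hlamext. exact Hm.
    + eapply gen_pull.
      * apply gen_top. apply gen_ext; exact Fext.
      * apply (gen_ext (le_rel le e) (fun j => lam0 (e j))).
        intros j; apply Fext.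
      * intros g [Theta [[HT1 HT2] Hg]]. apply gen_incl.
        exists (fun i x => Theta (cof i) (lam i (e (cof i)) (Hle i) x)).
        split; [split|].
        -- intros i. apply (proj2 (Hmor i (e (cof i)) (Hle i))). apply HT1.
        -- intros i j p x. simpl.
           rewrite (HT2 (cof i) (cof j) (Hmon i j p)).
           apply (Fext _ _ (HT1 (cof j))).
           apply Etr with (lam i (e (cof j)) (Htrans _ _ _ p (Hle j)) x).
           ++ apply Esym, Hcomp.
           ++ apply Hcomp.
        -- intros [i x]. rewrite Hg. reflexivity.
  - intros [j x]. simpl.
    assert (Hl : le (e (cof (e j))) (e j)).
    { apply (Hresp (e j) _ (e j) (e j)).
      - apply (proj1 (proj2 HeqI)). apply HeJ, Hcofe.
      - apply (proj1 HeqI).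
      - apply Hrefl. }
    exists j, Hl, (Hrefl (e j)). simpl.
    apply Etr with (lam (e j) (e j) (Htrans _ _ _ (Hle (e j)) Hl) x).
    + apply Esym, Hcomp.
    + apply Hpi.
  - intros [i x]. simpl.
    exists (e (cof i)), (Hrefl _), (Hle i). simpl. apply Hid.
Qed.
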